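(* For every integer $n\ge 2$, $|PF_{n,n-2}|=n^n-n^{n-2}$.
   Context: For $n\in\mathbb{N}$ let $[n]=\{1,\dots,n\}$ and $PP_n=[n]^n$. For an integer $k\ge 0$, the $k$-Naples parking rule: there are $n$ spots numbered $1,\dots,n$ west to east, initially empty; cars $c_1,\dots,c_n$ arrive in order, car $c_i$ preferring spot $a_i$. If spot $a_i$ is empty, $c_i$ parks there. Otherwise $c_i$ checks spots $a_i-1,\dots,a_i-k$ in this order (skipping those $<1$) and parks in the first empty one; if all are occupied, it drives east and parks in the first empty spot numbered greater than $a_i$, failing to park if none exists. $PF_{n,k}$ is the set of preferences in $PP_n$ for which all cars park. *)

(* Defs.v *)
From mathcomp Require Import all_boot.
Set Implicit Arguments. Unset Strict Implicit. Unset Printing Implicit Defensive.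

(* Spots are numbered 1..n; [occ] is the list of occupied spots.
   [find_first P s] returns the first element of [s] satisfying [P]. *)
Definition find_first (P : pred nat) (s : seq nat) : option nat :=
  let i := find P s in if i < size s then Some (nth 0 s i) else None.

(* Spot chosen by a car preferring spot [a] under the k-Naples rule,
   with n spots and occupied spots [occ]; None = fails to park. *)
Definition naples_spot (n k : nat) (occ : seq nat) (a : nat) : option nat :=
  let free := fun s : nat => s \notin occ in
  if free a then Some a
  else match find_first free [seq a - j | j <- iota 1 k & j < a] with
       (* a - j for j = 1..k, skipping those with a - j < 1 *)
       | Some s => Some s
       | None => find_first free (iota a.+1 (n - a))
       end.

Fixpoint naples_run (n k : nat) (occ : seq nat) (prefs : seq nat) : option (seq nat) :=
  match prefs with
  | [::] => Some occ
  | a :: rest =>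
      match naples_spot n k occ a with
      | Some s => naples_run n k (s :: occ) rest
      | None => None
      end
  end.

(* A preference sequence in PP_n = [n]^n, encoded as f : 'I_n -> 'I_n where
   car c_{i+1} prefers spot (f i).+1. *)
Definition prefs_of (n : nat) (f : {ffun 'I_n -> 'I_n}) : seq nat :=
  [seq (f i).+1 | i <- enum 'I_n].

Definition is_naples_pf (n k : nat) (f : {ffun 'I_n -> 'I_n}) : bool :=
  naples_run n k [::] (prefs_of f) != None.

Definition PF (n k : nat) : {set {ffun 'I_n -> 'I_n}} :=
  [set f | is_naples_pf k f].

(* Main.v *)
Require Import Defs.
From mathcomp Require Import all_boot.
From mathcomp Require Import all_algebra.
From mathcomp Require Import zify.
Set Implicit Arguments. Unset Strict Implicit. Unset Printing Implicit Defensive.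
Import GRing.Theory.

Lemma find_eqP (T : Type) (P : pred T) (s : seq T) x0 i :
  i < size s -> P (nth x0 s i) -> (forall j, j < i -> ~~ P (nth x0 s j)) ->
  find P s = i.
Proof.
elim: s i => [|x s IH] [|i] //= Hi HP Hb.
  by rewrite HP.
have := Hb 0 isT; rewrite /= => /negbTE ->; congr S; apply: IH => // j Hj.
exact: (Hb j.+1).
Qed.

Lemma find_firstE (P : pred nat) s i :
  i < size s -> P (nth 0 s i) -> (forall j, j < i -> ~~ P (nth 0 s j)) ->
  find_first P s = Some (nth 0 s i).
Proof. by move=> Hi HP Hb; rewrite /find_first (find_eqP Hi HP Hb) Hi. Qed.

Lemma find_firstS (P : pred nat) s x :
  find_first P s = Some x -> x \in s /\ P x.
Proof.
rewrite /find_first; case: ifP => // H [<-]; split; first exact: mem_nth.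
by apply: nth_find; rewrite has_find.
Qed.

Lemma find_firstN (P : pred nat) s :
  find_first P s = None -> forall x, x \in s -> ~~ P x.
Proof.
rewrite /find_first; case: ifP => // H _ x xs; apply/negP => Px.
by move: H; rewrite -has_find; case/negP; apply/hasP; exists x.
Qed.

Lemma find_first_has (P : pred nat) s x :
  x \in s -> P x -> find_first P s <> None.
Proof.
move=> xs Px; rewrite /find_first; case: ifP => // /negbT; rewrite -has_find.
by case/negP; apply/hasP; exists x.
Qed.

Section S.
Variable m : nat.
Local Notation n := m.+2.
Local Notation T := 'I_n.

Lemma val_natr (k : nat) : val ((k%:R)%R : T) = k %% n.
Proof. by rewrite Zp_nat. Qed.

Lemma val_subn (a : T) j : j <= a -> val (a - j%:R)%R = a - j.
Proof.
move=> ja; have -> : (a - j%:R = (a - j)%:R :> T)%R.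
  by apply/eqP; rewrite GRing.subr_eq -GRing.natrD subnK // natr_Zp.
rewrite val_natr modn_small //; have := ltn_ord a; lia.
Qed.

Definition cands (a : T) : seq T := [seq (a - j%:R)%R | j <- iota 0 n].
Definition cspot (occ : seq T) (a : T) : T :=
  nth a (cands a) (find (fun x => x \notin occ) (cands a)).
Fixpoint crun (occ : seq T) (h : seq T) : seq T :=
  if h is a :: r then crun (cspot occ a :: occ) r else occ.

Lemma size_cands a : size (cands a) = n.
Proof. by rewrite size_map size_iota. Qed.

Lemma nth_cands a x0 j : j < n -> nth x0 (cands a) j = (a - j%:R)%R.
Proof. by move=> jn; rewrite (nth_map 0) ?size_iota // nth_iota. Qed.

Lemma mem_cands a x : x \in cands a.
Proof.
apply/mapP; exists (val (a - x)%R); first by rewrite mem_iota add0n ltn_ord.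
by rewrite natr_Zp GRing.subKr.
Qed.

Lemma exists_free (occ : seq T) : size occ < n -> exists x : T, x \notin occ.
Proof.
move=> H; case: (pickP (fun x : T => x \notin occ)) => [x Hx|Hall]; first by exists x.
have := uniq_leq_size (enum_uniq T) (fun x _ => negbFE (Hall x)).
by rewrite size_enum_ord leqNgt H.
Qed.

Lemma cspot_free occ a : size occ < n -> cspot occ a \notin occ.
Proof.
move=> /exists_free [x Hx]; apply: (@nth_find _ a (fun x => x \notin occ)).
by apply/hasP; exists x => //; apply: mem_cands.
Qed.

Lemma mem_shift (c x : T) (s : seq T) : (x \in [seq (y + c)%R | y <- s]) = ((x - c)%R \in s).
Proof.
apply/mapP/idP => [[y ys ->]|H]; first by rewrite GRing.addrK.
by exists (x - c)%R => //; rewrite GRing.subrK.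
Qed.

Lemma cands_shift a c : cands (a + c)%R = [seq (y + c)%R | y <- cands a].
Proof. by rewrite -map_comp; apply: eq_map => j /=; rewrite GRing.addrAC. Qed.

Lemma cspot_shift occ a c :
  cspot [seq (y + c)%R | y <- occ] (a + c)%R = (cspot occ a + c)%R.
Proof.
rewrite /cspot cands_shift find_map.
have -> : find (preim (fun y => y + c)%R (fun x => x \notin [seq (y + c)%R | y <- occ])) (cands a)
        = find (fun x => x \notin occ) (cands a).
  by apply: eq_find => y /=; rewrite mem_shift GRing.addrK.
set i := find _ (cands a).
case: (ltnP i (size (cands a))) => H.
  by rewrite (nth_map a).
by rewrite (nth_default _ H) nth_default // size_map.
Qed.

Lemma crun_shift occ h c :
  crun [seq (y + c)%R | y <- occ] [seq (y + c)%R | y <- h] = [seq (y + c)%R | y <- crun occ h].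
Proof. by elim: h occ => [|a h IH] occ //=; rewrite cspot_shift -IH. Qed.

Lemma crun_sub occ h : {subset occ <= crun occ h}.
Proof.
elim: h occ => [|a h IH] occ //= x xo; apply: IH; by rewrite inE xo orbT.
Qed.

Lemma size_crun occ h : size (crun occ h) = size occ + size h.
Proof. by elim: h occ => [|a h IH] occ /=; rewrite ?addn0 // IH /= addnS. Qed.

Lemma uniq_crun occ h : uniq occ -> size occ + size h <= n -> uniq (crun occ h).
Proof.
elim: h occ => [|a h IH] occ //= Hu Hs; apply: IH => /=; last by rewrite addnS in Hs.
by rewrite Hu andbT cspot_free //; rewrite addnS in Hs; lia.
Qed.

Lemma cspot_spec occ a : (0%R : T) \notin occ ->
  [/\ nat_of_ord (cspot occ a) <= a, cspot occ a \notin occ &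
      forall t : T, nat_of_ord (cspot occ a) < t -> nat_of_ord t <= a -> t \in occ].
Proof.
move=> H0.
set P := (fun x : T => x \notin occ).
have Hfa : find P (cands a) <= a.
  rewrite leqNgt; apply/negP => /(before_find a).
  by rewrite nth_cands // natr_Zp GRing.subrr /P H0.
have Hfn : find P (cands a) < n by have := ltn_ord a; lia.
have Hs : nat_of_ord (cspot occ a) = a - find P (cands a).
  by rewrite /cspot nth_cands // val_subn.
have Hfree : cspot occ a \notin occ.
  apply: (@nth_find _ a P); apply/hasP; exists 0%R => //; exact: mem_cands.
split => //; first by rewrite Hs leq_subr.
move=> t Hst Hta.
have Hta2 : (t : nat) <= a := Hta.
have Hj : a - t < find P (cands a) by rewrite Hs in Hst; lia.
have := before_find a Hj; rewrite nth_cands; last by have := ltn_ord a; lia.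
have -> : (a - (a - t)%:R)%R = t.
  by apply: val_inj; rewrite val_subn ?leq_subr // subKn.
by rewrite /P => /negbFE.
Qed.


Lemma find_first_none (P : pred nat) s :
  (forall x, x \in s -> ~~ P x) -> find_first P s = None.
Proof.
move=> H; rewrite /find_first; case: ifP => // Hl.
have : has P s by rewrite has_find.
by case/hasP => x xs Px; move: (H x xs); rewrite Px.
Qed.

Lemma filt_iota m' b :
  [seq j <- iota 1 m' | j < b.+1] = iota 1 (minn m' b).
Proof.
case: (leqP m' b) => H.
  rewrite -[RHS]filter_predT; apply: eq_in_filter => j.
  by rewrite mem_iota /= => Hj; lia.
have -> : m' = b + (m' - b) by lia.
rewrite iotaD filter_cat.
have -> : [seq j <- iota 1 b | j < b.+1] = iota 1 b.
  rewrite -[RHS]filter_predT; apply: eq_in_filter => j.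
  by rewrite mem_iota /= => Hj; lia.
have -> : [seq j <- iota (1 + b) (m' - b) | j < b.+1] = [::].
  rewrite -(filter_pred0 (iota (1 + b) (m' - b))); apply: eq_in_filter => j.
  by rewrite mem_iota /= => Hj; lia.
by rewrite cats0.
Qed.

Definition sc (x : T) : nat := (val x).+1.

Lemma sc_inj : injective sc.
Proof. by move=> x y [] /val_inj. Qed.

Lemma mem_sc occ (x : T) : ((nat_of_ord x).+1 \in map sc occ) = (x \in occ).
Proof. exact: (mem_map sc_inj). Qed.

Lemma mem_sc_nat occ v : v \in map sc occ -> 0 < v <= n.
Proof. by case/mapP => x _ ->; rewrite /sc /= ltn_ord. Qed.

Lemma lemA occ (a : T) : uniq occ -> (0%R : T) \notin occ -> size occ <= m ->
  naples_spot n m (map sc occ) a.+1 = Some (cspot occ a).+1.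
Proof.
move=> Hu H0 Hsz.
have [Hsa Hsf Hall] := cspot_spec a H0.
set s := cspot occ a in Hsa Hsf Hall *.
rewrite /naples_spot mem_sc.
case Ha: (a \in occ); last first.
  rewrite /=; congr Some; congr S.
  apply/eqP; rewrite eqn_leq andbC Hsa /= leqNgt; apply/negP => H1.
  by have := Hall a H1 (leqnn _); rewrite Ha.
have Hsa' : (s : nat) < a.
  by rewrite ltn_neqAle Hsa andbT; apply/negP => /eqP /val_inj Hs; rewrite Hs Ha in Hsf.
have Hkm : a - s <= m.
  rewrite leqNgt; apply/negP => Hk.
  have Hs0 : (s : nat) = 0 by have := ltn_ord a; lia.
  have Hsub : predC1 (0%R : T) \subset occ.
    apply/subsetP => t; rewrite inE => Ht; apply: Hall.
      by rewrite Hs0 lt0n; apply/negP => /eqP Ht0; case/negP: Ht; apply/eqP/val_inj.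
    by have := ltn_ord t; have := ltn_ord a; lia.
  have := subset_leq_card Hsub; rewrite cardC1 card_ord.
  move=> H; have := leq_trans H (card_size occ) => /= Hc.
  by move: Hsz; rewrite leqNgt Hc.
rewrite /= filt_iota.
set L := [seq a.+1 - j | j <- iota 1 (minn m a)].
have HL : size L = minn m a by rewrite size_map size_iota.
have Hi : a - s - 1 < size L by rewrite HL; lia.
have HnL : forall j, j < size L -> nth 0 L j = a - j by move=> j Hj;
  rewrite HL in Hj; rewrite (nth_map 0) ?size_iota // nth_iota //; lia.
rewrite (@find_firstE _ L (a - s - 1)) //.
- by rewrite HnL //; congr Some; lia.
- rewrite HnL // (_ : a - (a - s - 1) = (nat_of_ord s).+1) ?mem_sc //; lia.
move=> j Hj; rewrite HnL; last by lia.
have Hjn : a - j - 1 < n by have := ltn_ord a; lia.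
have -> : a - j = (nat_of_ord (Ordinal Hjn)).+1 by rewrite /=; lia.
by rewrite mem_sc negbK; apply: Hall => /=; lia.
Qed.


Lemma lemC occ (l : T) : uniq occ -> (0%R:T) \notin occ -> size occ = m.+1 ->
  (naples_spot n m (map sc occ) l.+1 == None) = (l == ord_max).
Proof.
move=> Hu H0 Hsz.
have Hfull : forall x : T, (x \in occ) = (x != 0%R).
  have Hsub : occ \subset predC1 (0%R : T).
    by apply/subsetP => x xo; rewrite inE; apply: contraNneq H0 => <-.
  have Hc : #|occ| = #|predC1 (0%R:T)| by rewrite cardC1 card_ord (card_uniqP Hu) Hsz.
  by move=> x; have := (subset_cardP Hc Hsub) x; rewrite inE.
have Hnat : forall v, (v \in map sc occ) = (1 < v <= n).
  move=> v; apply/mapP/idP => [[x xo ->]|Hv].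
    rewrite Hfull in xo; rewrite /sc ltnS ltn_ord andbT lt0n.
    by apply: contra xo => /eqP H; apply/eqP/val_inj; rewrite /= H.
  have Hvn : v.-1 < n by lia.
  exists (Ordinal Hvn); last by rewrite /sc /=; lia.
  by rewrite Hfull; apply/eqP => /(congr1 val) /=; lia.
rewrite /naples_spot Hnat.
case: (ltnP 0 l) => Hl0; last first.
  have -> : (l : nat) = 0 by lia.
  by rewrite /=; apply/esym/negbTE; apply: contraTneq Hl0 => ->.
have -> : 1 < l.+1 <= n by rewrite ltnS Hl0 ltn_ord.
rewrite /=.
case: (eqVneq l ord_max) => Hlm.
  subst l; rewrite find_first_none.
    by have -> : n - (nat_of_ord (@ord_max m.+1)).+1 = 0 by rewrite /= subnn.
  move=> x /mapP [j]; rewrite mem_filter mem_iota => /andP [Hj1 Hj2] ->.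
  by rewrite negbK Hnat /=; lia.
have Hlm' : (l : nat) != m.+1 by apply/eqP => H; move/eqP: Hlm; apply; apply: val_inj.
have Hlt := ltn_ord l.
have : find_first (fun s0 : nat => s0 \notin [seq sc i | i <- occ])
         [seq l.+1 - j | j <- iota 1 m & j < l.+1] <> None.
  apply: (@find_first_has _ _ 1).
    apply/mapP; exists (nat_of_ord l); last by lia.
    by rewrite mem_filter mem_iota ltnSn /=; lia.
  by rewrite Hnat.
by case: find_first.
Qed.


Lemma lemB (occ : seq nat) a : uniq occ -> (forall x, x \in occ -> 0 < x <= n) ->
  1 \in occ -> size occ < n -> 0 < a <= n ->
  exists s, [/\ naples_spot n m occ a = Some s, s \notin occ & 0 < s <= n].
Proof.
move=> Hu Hr H1 Hsz Ha.
rewrite /naples_spot.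
case Hao: (a \in occ) => /=; last by exists a; rewrite Hao.
case E1: (find_first _ _) => [s|].
  have [Hs Pf] := find_firstS E1; exists s; split => //.
  by move: Hs => /mapP [j]; rewrite mem_filter mem_iota => /andP [Hj1 Hj2] ->; lia.
case E2: (find_first _ _) => [s|].
  have [Hs Pf] := find_firstS E2; exists s; split => //.
  by move: Hs; rewrite mem_iota; lia.
exfalso.
have N1 := find_firstN E1; have N2 := find_firstN E2.
have Hsub : {subset iota 1 n <= occ}.
  move=> x; rewrite mem_iota => Hx.
  case: (ltngtP x a) => Hxa.
  - case: (eqVneq x 1) => [->//|Hx1].
    have := N1 x; rewrite negbK; apply; apply/mapP; exists (a - x); last by lia.
    by rewrite mem_filter mem_iota; lia.
  - by have := N2 x; rewrite negbK; apply; rewrite mem_iota; lia.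
  - by rewrite Hxa.
have := uniq_leq_size (iota_uniq 1 n) Hsub; rewrite size_iota => H.
by move: Hsz; rewrite ltnNge H.
Qed.

Lemma lemG (prefs occ : seq nat) : uniq occ -> (forall x, x \in occ -> 0 < x <= n) ->
  1 \in occ -> (forall x, x \in prefs -> 0 < x <= n) -> size occ + size prefs <= n ->
  naples_run n m occ prefs <> None.
Proof.
elim: prefs occ => [|a r IH] occ Hu Hr H1 Hp Hsz //=.
have Hsz' : size occ < n by move: Hsz => /=; lia.
have [s [-> Hs Hsr]] := lemB Hu Hr H1 Hsz' (Hp a (mem_head _ _)).
apply: IH => /=.
- by rewrite Hs Hu.
- by move=> x; rewrite inE => /orP [/eqP->|/Hr].
- by rewrite inE H1 orbT.
- by move=> x xr; apply: Hp; rewrite inE xr orbT.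
- by move: Hsz => /=; lia.
Qed.


Lemma main_run (h occ : seq T) (l : T) : uniq occ -> (0%R:T) \notin occ ->
  size occ + size h = m.+1 ->
  (naples_run n m (map sc occ) (map sc (h ++ [:: l])) != None)
  = ((0%R:T) \in crun occ h) || (l != ord_max).
Proof.
elim: h occ => [|a h IH] occ Hu H0 Hsz /=.
  rewrite addn0 in Hsz; rewrite (negbTE H0) /=.
  have := lemC l Hu H0 Hsz.
  rewrite -[sc l]/(nat_of_ord l).+1.
  by case: naples_spot => [s|] /= <-.
move: Hsz; rewrite [size (a :: h)]/= addnS => -[] Hsz.
have Hszm : size occ <= m by move: Hsz; move: (size occ) (size h) => x y; lia.
have Hszn : size occ < n by move: Hszm; move: (size occ) => x; lia.
rewrite -[sc a]/(nat_of_ord a).+1 (lemA a Hu H0 Hszm) /=.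
set s := cspot occ a.
have Hsf : s \notin occ by apply: cspot_free.
case: (eqVneq s 0%R) => Hs0.
  have -> : (0%R : T) \in crun (s :: occ) h by apply: crun_sub; rewrite Hs0 mem_head.
  apply/negP => /eqP.
  apply: (@lemG (map sc (h ++ [:: l])) (map sc (s :: occ))).
  - by rewrite (map_inj_uniq sc_inj) /= Hsf Hu.
  - by move=> x /mapP [y _ ->]; rewrite /sc ltn_ord.
  - by rewrite /= Hs0 mem_head.
  - by move=> x /mapP [y _ ->]; rewrite /sc ltn_ord.
  - rewrite !size_map size_cat (_ : size (s :: occ) = (size occ).+1) // (_ : size [:: l] = 1) //; move: Hsz; move: (size occ) (size h) => x y; lia.
have IH2 := IH (s :: occ); rewrite /= in IH2; rewrite IH2 //.
- by rewrite Hsf Hu.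
- by rewrite inE negb_or eq_sym Hs0 H0.
- by move: Hsz; move: (size occ) (size h) => x y; lia.
Qed.


Definition hseq (f : {ffun T -> T}) : seq T :=
  [seq f (widen_ord (leqnSn _) i) | i <- enum 'I_(m.+1)].
Definition occf f := crun [::] (hseq f).

Lemma size_hseq f : size (hseq f) = m.+1.
Proof. by rewrite size_map size_enum_ord. Qed.

Lemma uniq_occf f : uniq (occf f).
Proof. by apply: uniq_crun => //; rewrite size_hseq. Qed.

Lemma size_occf f : size (occf f) = m.+1.
Proof. by rewrite size_crun size_hseq. Qed.

Lemma pf_char f : is_naples_pf m f = ((0%R:T) \in occf f) || (f ord_max != ord_max).
Proof.
rewrite /is_naples_pf.
have -> : prefs_of f = map sc (hseq f ++ [:: f ord_max]).
  by rewrite /prefs_of /hseq enum_ordSr cats1 !map_rcons -!map_comp.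
by rewrite -(main_run _ (occ := [::])) // size_hseq.
Qed.

Definition sh2 (c d : T) (f : {ffun T -> T}) : {ffun T -> T} :=
  [ffun i => if i == ord_max then (f i + d)%R else (f i + c)%R].

Lemma hseq_sh2 c d f : hseq (sh2 c d f) = [seq (y + c)%R | y <- hseq f].
Proof.
rewrite /hseq -[in RHS]map_comp; apply: eq_map => i /=; rewrite ffunE.
have -> : (widen_ord (leqnSn m.+1) i == ord_max) = false.
  by apply/negbTE; rewrite -val_eqE /= neq_ltn ltn_ord.
by [].
Qed.

Lemma occf_sh2 c d f x : (x \in occf (sh2 c d f)) = ((x - c)%R \in occf f).
Proof.
by rewrite /occf hseq_sh2 -[[::]]/(map (fun y => (y + c)%R) [::]) crun_shift mem_shift.
Qed.

Lemma sh2K c d : cancel (sh2 c d) (sh2 (- c)%R (- d)%R).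
Proof.
move=> f; apply/ffunP => i; rewrite !ffunE; case: (i == ord_max); by rewrite GRing.addrK.
Qed.

Definition B (c d : T) : {set {ffun T -> T}} :=
  [set f | (c \notin occf f) && (f ord_max == d)].

Lemma card_B c d : #|B c d| = #|B 0%R 0%R|.
Proof.
rewrite -[RHS](card_preimset _ (can_inj (sh2K (- c)%R (- d)%R))).
apply: eq_card => f; rewrite !inE occf_sh2 ffunE eqxx GRing.sub0r GRing.opprK.
by rewrite GRing.subr_eq0.
Qed.

Lemma sum_one f :
  \sum_(c : T) \sum_(d : T) (if f \in B c d then 1 else 0) = 1.
Proof.
have E : forall c : T, \sum_(d : T) (if f \in B c d then 1 else 0) = (c \notin occf f).
  move=> c; rewrite (bigD1 (f ord_max)) //= inE eqxx andbT big1 ?addn0.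
    by case: (c \notin occf f).
  by move=> d Hd; rewrite inE eq_sym (negbTE Hd) andbF.
rewrite (eq_bigr _ (fun c _ => E c)).
rewrite -big_mkcond /= sum1_card.
have := cardC (mem (occf f)); rewrite (card_uniqP (uniq_occf f)) size_occf card_ord.
move=> H; have H2 : #|[predC (mem (occf f))]| = 1 by apply/eqP; rewrite -(eqn_add2l m.+1) H addn1.
rewrite -H2.
by apply: eq_card => x; rewrite !inE.
Qed.


Lemma card_B00 : #|B (0%R:T) 0%R| = n ^ m.
Proof.
have Hs : \sum_(c : T) \sum_(d : T) #|B c d| = n ^ n.
  transitivity (\sum_(c:T) \sum_(d:T) \sum_(f : {ffun T -> T}) (if f \in B c d then 1 else 0)).
    by apply: eq_bigr => c _; apply: eq_bigr => d _; rewrite -sum1_card big_mkcond.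
  under eq_bigr do rewrite exchange_big.
  rewrite exchange_big.
  under eq_bigr do rewrite sum_one.
  by rewrite sum1_card card_ffun !card_ord.
have Hs2 : \sum_(c:T) \sum_(d:T) #|B c d| = \sum_(c:T) \sum_(d:T) #|B (0%R:T) 0%R|.
  by apply: eq_bigr => c _; apply: eq_bigr => d _; exact: card_B.
rewrite Hs2 in Hs.
rewrite !big_const_ord !iter_addn_0 in Hs.
apply/eqP; rewrite -(@eqn_pmul2r n) // -(@eqn_pmul2r n) // Hs.
by rewrite -!expnSr.
Qed.

End S.

Theorem corollary2p4 (n : nat) : 2 <= n -> #|PF n (n - 2)| = n ^ n - n ^ (n - 2).
Proof.
case: n => [|[|m]] // _.
rewrite (_ : m.+2 - 2 = m); last by lia.
have -> : PF m.+2 m = ~: B (0%R : 'I_m.+2) ord_max.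
  by apply/setP => f; rewrite !inE pf_char negb_and negbK.
have := cardsC (B (0%R : 'I_m.+2) ord_max).
rewrite card_B card_B00 card_ffun !card_ord => <-.
by rewrite addKn.
Qed.
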